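(* Let $\mathcal{A}$ and $\mathcal{B}$ be unital algebras over a field of characteristic zero, let $\mathcal{M}$ be an $(\mathcal{A},\mathcal{B})$-bimodule which is faithful as a left $\mathcal{A}$-module and as a right $\mathcal{B}$-module, and let $\mathcal{T}=Tri(\mathcal{A},\mathcal{M},\mathcal{B})$ be the associated (unital) triangular algebra, with identity $\mathbf{1}$ and center $Z(\mathcal{T})$. Let $n>1$ be an integer, let $\gamma$ be an invertible element of $Z(\mathcal{T})$, and let $\Psi,\Omega:\mathcal{T}\to\mathcal{T}$ be additive mappings satisfying \[ \Psi(X^n)=\gamma X\,\Omega(X^{n-1})=\gamma\,\Omega(X^{n-1})X\quad\text{for all } X\in\mathcal{T}. \] If $\Omega(\mathbf{1})\in Z(\mathcal{T})$, then $\Psi$ and $\Omega$ are two-sided centralizers on $\mathcal{T}$ and $\Psi=\gamma\Omega$.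
   Context: For algebras $\mathcal{A},\mathcal{B}$ and an $(\mathcal{A},\mathcal{B})$-bimodule $\mathcal{M}$, the triangular algebra $Tri(\mathcal{A},\mathcal{M},\mathcal{B})$ is the set of matrices $\begin{bmatrix} a & m\\ 0 & b\end{bmatrix}$ with $a\in\mathcal{A}$, $m\in\mathcal{M}$, $b\in\mathcal{B}$, under the usual matrix operations; it is unital when $\mathcal{A}$ and $\mathcal{B}$ are. Its center is $Z(\mathcal{T})=\{a\oplus b: a\in Z(\mathcal{A}),\ b\in Z(\mathcal{B}),\ am=mb \text{ for all } m\in\mathcal{M}\}$. An additive map $T:\mathcal{T}\to\mathcal{T}$ is a two-sided centralizer if $T(XY)=T(X)Y=XT(Y)$ for all $X,Y\in\mathcal{T}$. *)

(* Defs.v *)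
From HB Require Import structures.
From mathcomp Require Import all_boot all_order all_algebra.
Set Implicit Arguments. Unset Strict Implicit. Unset Printing Implicit Defensive.
Import GRing.Theory.
Local Open Scope ring_scope.

Section Tri.
Variables (F : fieldType) (A B : algType F) (M : lmodType F).
Variables (lact : A -> M -> M) (ract : M -> B -> M).

Record is_bimodule : Prop := IsBimodule {
  lactDr : forall a m1 m2, lact a (m1 + m2) = lact a m1 + lact a m2;
  lactDl : forall a1 a2 m, lact (a1 + a2) m = lact a1 m + lact a2 m;
  lactM : forall a1 a2 m, lact (a1 * a2) m = lact a1 (lact a2 m);
  lact1 : forall m, lact 1 m = m;
  lactZl : forall (k : F) a m, lact (k *: a) m = k *: lact a m;
  lactZr : forall (k : F) a m, lact a (k *: m) = k *: lact a m;
  ractDl : forall m1 m2 b, ract (m1 + m2) b = ract m1 b + ract m2 b;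
  ractDr : forall m b1 b2, ract m (b1 + b2) = ract m b1 + ract m b2;
  ractM : forall m b1 b2, ract m (b1 * b2) = ract (ract m b1) b2;
  ract1 : forall m, ract m 1 = m;
  ractZl : forall (k : F) m b, ract (k *: m) b = k *: ract m b;
  ractZr : forall (k : F) m b, ract m (k *: b) = k *: ract m b;
  lract : forall a m b, ract (lact a m) b = lact a (ract m b)
}.

Definition faithful_left : Prop :=
  forall a : A, (forall m : M, lact a m = 0) -> a = 0.
Definition faithful_right : Prop :=
  forall b : B, (forall m : M, ract m b = 0) -> b = 0.

(* The triangular algebra Tri(A,M,B): the matrix [a m; 0 b] is encoded as
   the triple ((a, m), b).  Its additive group is the product group. *)
Definition Tri := (A * M * B)%type.

Definition tri_mul (X Y : Tri) : Tri :=
  let: (a1, m1, b1) := X in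
  let: (a2, m2, b2) := Y in
  (a1 * a2, lact a1 m2 + ract m1 b2, b1 * b2).

Definition tri_one : Tri := (1, 0, 1).

Fixpoint tri_pow (X : Tri) (k : nat) : Tri :=
  match k with
  | 0 => tri_one
  | k'.+1 => tri_mul X (tri_pow X k')
  end.

Definition tri_center (Z : Tri) : Prop :=
  forall X : Tri, tri_mul Z X = tri_mul X Z.

Definition tri_invertible (g : Tri) : Prop :=
  exists h : Tri, tri_mul g h = tri_one /\ tri_mul h g = tri_one.

Definition tri_additive (f : Tri -> Tri) : Prop :=
  forall X Y : Tri, f (X + Y) = f X + f Y.

Definition two_sided_centralizer (f : Tri -> Tri) : Prop :=
  tri_additive f /\
  forall X Y : Tri, f (tri_mul X Y) = tri_mul (f X) Y /\
                    tri_mul (f X) Y = tri_mul X (f Y).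

End Tri.

(* Main.v *)
Require Import Defs.
From HB Require Import structures.
From mathcomp Require Import all_boot all_order all_algebra zify.
Import GRing.Theory.
Local Open Scope ring_scope.

Lemma interp (F : fieldType) (charF0 : [pchar F] =i pred0) (V : lmodType F) (m : nat) (v : nat -> V) :
 (forall k, (k <= m)%N -> \sum_(i < m.+1) v i *+ (k ^ i) = 0) -> forall r, (r <= m)%N -> v r = 0.
Proof.
move=> H r hr.
pose a : 'rV[F]_(m.+1) := \row_j ((j : nat)%:R).
pose W := Vandermonde m.+1 a.
have Wu : W \in unitmx.
  rewrite unitmxE det_Vandermonde unitfE; apply/prodf_neq0 => i _; apply/prodf_neq0 => j ij.
  rewrite !mxE subr_eq0; apply/negP => /eqP e.
  have : ((j - i)%N%:R == 0 :> F). by rewrite natrB ?e ?subrr // ltnW.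
  by rewrite ((pcharf0P _).1 charF0) subn_eq0 leqNgt ij.
have E := mulmxV Wu.
pose r' : 'I_m.+1 := Ordinal (hr : (r < m.+1)%N).
have -> : v r = \sum_(i < m.+1) ((W *m invmx W) i r') *: v i.
  rewrite E (bigD1 r') //= !mxE eqxx scale1r big1 ?addr0 // => i ir.
  by rewrite !mxE (negbTE ir) scale0r.
under eq_bigr do rewrite mxE scaler_suml.
rewrite exchange_big /= big1 // => j _.
have hj : (j <= m)%N by rewrite -ltnS.
transitivity (invmx W j r' *: \sum_(i < m.+1) v i *+ (j ^ i)); last by rewrite H // scaler0.
rewrite scaler_sumr.
apply: eq_bigr => i _; rewrite mulrC -scalerA; congr (_ *: _).
by rewrite !mxE -scaler_nat natrX.
Qed.

Section Ring.
Variables (F : fieldType) (A B : algType F) (M : lmodType F).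
Variables (lact : A -> M -> M) (ract : M -> B -> M).
Hypothesis Hb : is_bimodule lact ract.
Hypothesis charF0 : [pchar F] =i pred0.

Lemma lact0r a : lact a 0 = 0.
Proof. by apply: (@addrI _ (lact a 0)); rewrite -(lactDr Hb) !addr0. Qed.
Lemma lact0l m : lact 0 m = 0.
Proof. by apply: (@addrI _ (lact 0 m)); rewrite -(lactDl Hb) !addr0. Qed.
Lemma ract0l b : ract 0 b = 0.
Proof. by apply: (@addrI _ (ract 0 b)); rewrite -(ractDl Hb) !addr0. Qed.
Lemma ract0r m : ract m 0 = 0.
Proof. by apply: (@addrI _ (ract m 0)); rewrite -(ractDr Hb) !addr0. Qed.

Definition TR := Tri A B M.
HB.instance Definition _ := GRing.Lmodule.on TR.

Lemma tmulA : associative (tri_mul lact ract : TR -> TR -> TR).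
Proof.
move=> [[a1 m1] b1] [[a2 m2] b2] [[a3 m3] b3] /=.
by rewrite !mulrA (lactM Hb) (lactDr Hb) (ractDl Hb) (ractM Hb) (lract Hb) addrA.
Qed.
Lemma tmul1 : left_id (tri_one A B M : TR) (tri_mul lact ract).
Proof. by move=> [[a m] b] /=; rewrite !mul1r (lact1 Hb) ract0l addr0. Qed.
Lemma tmulr1 : right_id (tri_one A B M : TR) (tri_mul lact ract).
Proof. by move=> [[a m] b] /=; rewrite !mulr1 (ract1 Hb) lact0r add0r. Qed.
Lemma tmulDl : left_distributive (tri_mul lact ract : TR -> TR -> TR) +%R.
Proof.
move=> [[a1 m1] b1] [[a2 m2] b2] [[a3 m3] b3] /=.
rewrite !mulrDl (lactDl Hb) (ractDl Hb).
congr (_, _, _); rewrite -!addrA; congr (_ + _); rewrite addrCA; congr (_ + _); exact: addrC.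
Qed.
Lemma tmulDr : right_distributive (tri_mul lact ract : TR -> TR -> TR) +%R.
Proof.
move=> [[a1 m1] b1] [[a2 m2] b2] [[a3 m3] b3] /=.
rewrite !mulrDr (lactDr Hb) (ractDr Hb).
congr (_, _, _); rewrite -!addrA; congr (_ + _); rewrite addrCA; congr (_ + _); exact: addrC.
Qed.

HB.instance Definition _ := GRing.Zmodule_isPzRing.Build TR tmulA tmul1 tmulr1 tmulDl tmulDr.

Lemma mulE (X Y : TR) : tri_mul lact ract X Y = X * Y.
Proof. by []. Qed.
Lemma oneE : tri_one A B M = 1 :> TR.
Proof. by []. Qed.
Lemma powE (X : TR) k : tri_pow lact ract X k = X ^+ k.
Proof. elim: k => // k IH; by rewrite /= IH exprS. Qed.

Lemma mulIn (x : TR) k : (0 < k)%N -> x *+ k = 0 -> x = 0.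
Proof.
move=> k0 e; have nz : (k%:R : F) != 0 by rewrite ((pcharf0P _).1 charF0) -lt0n.
by rewrite -(scalerK nz x) scaler_nat e scaler0.
Qed.

Section Add.
Variable f : TR -> TR.
Hypothesis fD : forall x y, f (x + y) = f x + f y.
Lemma f0 : f 0 = 0.
Proof. by apply: (@addrI _ (f 0)); rewrite -fD !addr0. Qed.
Lemma fN x : f (- x) = - f x.
Proof. by apply: (@addrI _ (f x)); rewrite -fD !subrr f0. Qed.
Lemma fB x y : f (x - y) = f x - f y.
Proof. by rewrite fD fN. Qed.
Lemma fMn x k : f (x *+ k) = f x *+ k.
Proof. elim: k => [|k IH]; by rewrite ?f0 // !mulrS fD IH. Qed.
Lemma fsum p (G : 'I_p -> TR) : f (\sum_(i < p) G i) = \sum_(i < p) f (G i).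
Proof. exact: (big_morph f fD f0). Qed.
End Add.

Lemma ZexpE (X : TR) k j :
  (X *+ k + 1) ^+ j = \sum_(i < j.+1) X ^+ i *+ ('C(j, i) * k ^ i).
Proof. by rewrite exprD1n; apply: eq_bigr => i _; rewrite exprMn_n -mulrnA mulnC. Qed.

Lemma coeffs (Psi Omega : TR -> TR)
  (addP : forall x y, Psi (x + y) = Psi x + Psi y)
  (addO : forall x y, Omega (x + y) = Omega x + Omega y)
  (g : TR) N (N1 : (0 < N)%N)
  (H1 : forall X, Psi (X ^+ N.+1) = g * (X * Omega (X ^+ N)))
  (H2 : forall X, X * Omega (X ^+ N) = Omega (X ^+ N) * X) (X : TR) :
  [/\ Psi X *+ N.+1 - (g * Omega X) *+ N - g * (X * Omega 1) = 0,
     Psi (X ^+ 2) *+ 'C(N.+1, 2) - (g * Omega (X ^+ 2)) *+ 'C(N, 2)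
        - (g * (X * Omega X)) *+ N = 0
   & X * Omega X = Omega X * X].
Proof.
pose v i := Psi (X ^+ i) *+ 'C(N.+1, i) - (g * Omega (X ^+ i)) *+ 'C(N, i)
   - (if i is j.+1 then (g * (X * Omega (X ^+ j))) *+ 'C(N, j) else 0).
pose u i := if i is j.+1 then (X * Omega (X ^+ j) - Omega (X ^+ j) * X) *+ 'C(N, j) else 0.
have Hv : forall k, (k <= N.+1)%N -> \sum_(i < N.+2) v i *+ k ^ i = 0.
  move=> k _; have := H1 (X *+ k + 1); rewrite !ZexpE (fsum _ addP) (fsum _ addO).
  under eq_bigr do rewrite (fMn _ addP).
  under [in X in _ = _ * (_ * X)]eq_bigr do rewrite (fMn _ addO).
  move=> E.
  have -> : \sum_(i < N.+2) v i *+ k ^ i =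
     \sum_(i < N.+2) Psi (X ^+ i) *+ ('C(N.+1, i) * k ^ i)
   - \sum_(i < N.+2) (g * Omega (X ^+ i)) *+ ('C(N, i) * k ^ i)
   - \sum_(i < N.+2) (if (i : nat) is j.+1 then (g * (X * Omega (X ^+ j))) *+ 'C(N, j) else 0) *+ k ^ i.
    by rewrite -!sumrB; apply: eq_bigr => i _; rewrite /v !mulrnBl -!mulrnA.
  rewrite E [in X in _ - X - _]big_ord_recr /= bin_small // mul0n mulr0n addr0.
  rewrite [in X in _ - X]big_ord_recl /= mul0rn add0r.
  rewrite mulrDl mul1r mulrDr mulrnAl mulrnAr !mulr_sumr -sumrMnl.
  have e1 : \sum_(i < N.+1) g * (Omega (X ^+ i) *+ ('C(N, i) * k ^ i))
      = \sum_(i < N.+1) g * Omega (X ^+ i) *+ ('C(N, i) * k ^ i).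
    by apply: eq_bigr => i _; rewrite mulrnAr.
  have e2 : \sum_(i < N.+1) g * (X * Omega (X ^+ (0 + i))) *+ 'C(N, 0 + i) *+ k ^ bump 0 i
      = \sum_(i < N.+1) g * (X * (Omega (X ^+ i) *+ ('C(N, i) * k ^ i))) *+ k.
    apply: eq_bigr => i _; rewrite add0n /bump /= add1n expnS !mulrnAr -!mulrnA.
    by congr (_ *+ _); rewrite -mulnA; congr (_ * _)%N; exact: mulnC.
  by rewrite e1 e2 addrK subrr.
have Hu : forall k, (k <= N.+1)%N -> \sum_(i < N.+2) u i *+ k ^ i = 0.
  move=> k _; have := H2 (X *+ k + 1); rewrite !ZexpE (fsum _ addO).
  under eq_bigr do rewrite (fMn _ addO).
  rewrite mulrDl mulrDr mul1r mulr1 => /(congr1 (fun y => y - \sum_(i < N.+1) Omega (X ^+ i) *+ ('C(N, i) * k ^ i) - (\sum_(i < N.+1) Omega (X ^+ i) *+ ('C(N, i) * k ^ i)) * X *+ k)).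
  rewrite !addrK mulrnAr subrr mulrnAl -mulrnBl.
  move=> E; rewrite big_ord_recl /u /= mul0rn add0r -[RHS]E mulr_sumr mulr_suml -sumrB -sumrMnl.
  apply: eq_bigr => i _; rewrite /bump /= add1n expnS -mulrnA mulrnAr mulrnAl -mulrnBl -!mulrnA.
  by congr (_ *+ _); rewrite -mulnA; congr (_ * _)%N; exact: mulnC.
split.
- have := @interp _ charF0 _ _ _ Hv 1 isT; rewrite /v /= expr1 expr0 !bin1 bin0 mulr1n.
  move=> h; exact: h.
- by have := @interp _ charF0 _ _ _ Hv 2 N1; rewrite /v /= expr1 bin1.
- have := @interp _ charF0 _ _ _ Hu 2 N1; rewrite /u expr1 bin1 => /(mulIn _ _ N1) /eqP.
  by rewrite subr_eq0 => /eqP.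
Qed.

Lemma canc6 (V : zmodType) (a p q r s d : V) :
  a *+ 2 + p + (q + d *+ 2) = a *+ 2 + r *+ 2 + (s *+ 2 + d *+ 2) ->
  p + q = r *+ 2 + s *+ 2.
Proof.
rewrite !mulr2n -!addrA => /addrI /addrI; rewrite !addrA => /addIr /addIr E.
exact: E.
Qed.

Lemma canc4 (V : zmodType) (a p q r s d : V) :
  a + p + (q + d) = a + r + (s + d) -> p + q = s + r.
Proof.
rewrite -!addrA => /addrI; rewrite !addrA => /addIr E.
by rewrite [RHS]addrC E.
Qed.

Section DZero.
Variable D : TR -> TR.
Hypothesis addD : forall x y, D (x + y) = D x + D y.
Hypothesis DJ : forall X, D (X * X) = (X * D X) *+ 2.
Hypothesis DC : forall X, X * D X = D X * X.

Lemma LJ X Y : D (X * Y + Y * X) = (X * D Y + Y * D X) *+ 2.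
Proof.
have E := DJ (X + Y).
rewrite mulrDl !mulrDr !addD !DJ !mulrDl !mulrDr !mulrnDl in E.
rewrite addD mulrnDl; exact: canc6 E.
Qed.

Lemma LC X Y : X * D Y + Y * D X = D Y * X + D X * Y.
Proof.
have E := DC (X + Y).
rewrite !addD !mulrDl !mulrDr (DC X) (DC Y) in E.
exact: canc4 E.
Qed.

Lemma idem (e y : TR) : e * e = e -> y = (e * y) *+ 2 -> y = 0.
Proof.
move=> ee H.
have ez : e * (e * y) = e * y by rewrite mulrA ee.
have z0 : e * y = 0.
  apply: (@addrI _ (e * y)); rewrite addr0 -mulr2n -{1}ez -mulrnAr -H; reflexivity.
by rewrite H z0 mul0rn.
Qed.

Hypothesis HfL : faithful_left lact.
Hypothesis HfR : faithful_right ract.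

Ltac tsimp := rewrite ?(mul0r, mulr0, mul1r, mulr1, lact0l, lact0r, ract0l, ract0r, addr0, add0r, (lact1 Hb), (ract1 Hb)).

Lemma Dzero X : D X = 0.
Proof.
pose e : TR := ((1, 0), 0).
have ee : e * e = e.
  rewrite -mulE /= mulr1 mul0r lact0r ract0l addr0. reflexivity.
have De : D e = 0 by apply: (@idem e _ ee); rewrite -DJ ee.
have D0 : D 0 = 0 by apply: (@addrI _ (D 0)); rewrite -addD !addr0.
have DN : forall m, D ((0, m), 0) = 0.
  move=> m; set N : TR := ((0, m), 0).
  have eN : e * N = N by rewrite -mulE /= mul1r mul0r (lact1 Hb) ract0l addr0.
  have Ne : N * e = 0 by rewrite -mulE /= mulr0 lact0l ract0r addr0 mul0r.
  apply: (@idem e _ ee); have := LJ e N; rewrite eN Ne addr0 De mulr0 addr0 => h; exact: h.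
have DP : forall a, D ((a, 0), 0) = 0.
  move=> a; set P : TR := ((a, 0), 0).
  have eP : e * P = P by rewrite -mulE /= mul1r (lact1 Hb) ract0l addr0 mulr0.
  have Pe : P * e = P by rewrite -mulE /= mulr1 lact0r ract0l addr0 mulr0.
  have h1 : D P = e * D P.
    have := LJ e P; rewrite eP Pe De mulr0 addr0 addD -mulr2n => /eqP.
    rewrite -subr_eq0 -mulrnBl => /eqP /(mulIn _ 2 isT) /eqP; rewrite subr_eq0 => /eqP h.
    exact: h.
  have h2 : e * D P = D P * e.
    have := LC e P; rewrite De mulr0 mul0r !addr0 => h; exact: h.
  have h3 : forall m, D P * ((0, m), 0) = 0.
    move=> m; have := LC P ((0, m), 0); rewrite DN mulr0 mul0r !add0r => <-.
    rewrite h1 mulrA.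
    have -> : (((0, m), 0) : TR) * e = 0.
      rewrite -mulE /= mulr0 lact0l ract0r addr0 mul0r; reflexivity.
    exact: mul0r.
  have E : D P = e * (D P * e) by rewrite -h2 mulrA ee.
  move: (D P) E h3 => [[p q] r] E h3.
  have p0 : p = 0.
    apply: HfL => m; have := h3 m; rewrite -mulE /= => -[_ hm _].
    by rewrite ract0r addr0 in hm.
  rewrite E; change (tri_mul lact ract e (tri_mul lact ract ((p, q), r) e) = 0); rewrite /= p0.
  by rewrite !(mul0r, mulr0, mul1r, lact0l, lact0r, ract0l, ract0r, addr0, add0r).
have DQ : forall b, D ((0, 0), b) = 0.
  move=> b; set Q : TR := ((0, 0), b).
  have eQ : e * Q = 0 by rewrite -mulE /=; tsimp.
  have Qe : Q * e = 0 by rewrite -mulE /=; tsimp.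
  have h1 : e * D Q = 0.
    have := LJ e Q; rewrite eQ Qe addr0 D0 De mulr0 addr0 => /esym /(mulIn _ 2 isT) h.
    exact: h.
  have h2 : forall m : M, (((0, m), 0) : TR) * D Q = D Q * (((0, m), 0) : TR).
    move=> m; have := LC Q ((0, m), 0); rewrite DN mulr0 mul0r !add0r => h; exact: h.
  move: (D Q) h1 h2 => [[p q] r] h1 h2.
  have [p0 q0] : p = 0 /\ q = 0.
    move: h1; rewrite -mulE /= => -[hp hq].
    by rewrite mul1r in hp; rewrite (lact1 Hb) ract0l addr0 in hq.
  have r0 : r = 0.
    apply: HfR => m; have := h2 m; rewrite -!mulE /= p0 q0 => -[hm].
    move: hm; tsimp => hm _; exact: hm.
  by rewrite p0 q0 r0.
case: X => [[a m] b].
have -> : ((a, m), b) = ((a, 0), 0) + ((0, m), 0) + ((0, 0), b) :> TR.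
  change ((a, m, b) = ((a + 0 + 0, 0 + m + 0), 0 + 0 + b)).
  by rewrite !addr0 !add0r.
by rewrite !addD DP DN DQ !addr0.
Qed.
End DZero.
Lemma binfacts N : (N * 'C(N.+1, 2) = 'C(N, 2) * N.+1 + 'C(N.+1, 2))%N /\ (N * N.+1 = 'C(N.+1, 2) * 2)%N.
Proof.
have t : forall K, ('C(K.+1, 2) * 2 = K.+1 * K)%N.
  elim=> [|K IH] //; rewrite binS bin1 mulnDl IH; lia.
have b : 'C(N.+1, 2) = ('C(N, 2) + N)%N by rewrite binS bin1.
have := t N; rewrite b; case: N b => [|N] b; first by [].
have := t N; rewrite -b. nia.
Qed.

Lemma main_ring (Psi Omega : TR -> TR)
  (addP : forall x y, Psi (x + y) = Psi x + Psi y)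
  (addO : forall x y, Omega (x + y) = Omega x + Omega y)
  (g h : TR) (hg : h * g = 1) N (N1 : (0 < N)%N)
  (H1 : forall X, Psi (X ^+ N.+1) = g * (X * Omega (X ^+ N)))
  (H2' : forall X, g * (X * Omega (X ^+ N)) = g * (Omega (X ^+ N) * X))
  (cC : forall x, Omega 1 * x = x * Omega 1)
  (HfL : faithful_left lact) (HfR : faithful_right ract) :
  (forall X, Omega X = Omega 1 * X) /\ (forall X, Psi X = g * Omega X).
Proof.
have canc : forall x y, g * x = g * y -> x = y.
  by move=> x y e; rewrite -(mul1r x) -hg -mulrA e mulrA hg mul1r.
have H2 : forall X, X * Omega (X ^+ N) = Omega (X ^+ N) * X by move=> X; apply: canc.
have CF := coeffs _ _ addP addO _ _ N1 H1 H2.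
set c := Omega 1.
pose D X := Omega X - c * X.
have addD : forall x y, D (x + y) = D x + D y.
  by move=> x y; rewrite /D addO mulrDr opprD addrACA.
have key : forall X, Omega (X ^+ 2) + X ^+ 2 * c = (X * Omega X) *+ 2.
  move=> X; have [v1 _ _] := CF (X ^+ 2); have [_ v2 _] := CF X.
  have e1 : Psi (X ^+ 2) *+ N.+1 = g * (Omega (X ^+ 2) *+ N + X ^+ 2 * c).
    apply/eqP; rewrite mulrDr mulrnAr -subr_eq0 opprD addrA; apply/eqP; exact: v1.
  have e2 : Psi (X ^+ 2) *+ 'C(N.+1, 2) = g * (Omega (X ^+ 2) *+ 'C(N, 2) + (X * Omega X) *+ N).
    apply/eqP; rewrite mulrDr !mulrnAr -subr_eq0 opprD addrA; apply/eqP; exact: v2.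
  have : g * ((Omega (X ^+ 2) *+ N + X ^+ 2 * c) *+ 'C(N.+1, 2))
       = g * ((Omega (X ^+ 2) *+ 'C(N, 2) + (X * Omega X) *+ N) *+ N.+1).
    by rewrite !mulrnAr -e1 -e2 -!mulrnA mulnC.
  move/canc; rewrite !mulrnDl -!mulrnA.
  have [f1 f2] := binfacts N.
  rewrite f1 f2 mulrnDr -addrA => /addrI.
  rewrite -mulrnDl mulrnA mulrnAC => /eqP; rewrite -subr_eq0 -mulrnBl => /eqP.
  have q0 : (0 < 'C(N.+1, 2))%N by rewrite bin_gt0.
  move/(mulIn _ _ q0)/eqP; rewrite subr_eq0 => /eqP h'; exact: h'.
have cX : forall X, X * (c * X) = c * (X * X) by move=> X; rewrite mulrA -cC mulrA.
have DJ : forall X, D (X * X) = (X * D X) *+ 2.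
  move=> X; rewrite /D mulrBr mulrnBl -cX.
  have := key X; rewrite expr2 -cC => /(congr1 (fun y => y - c * (X * X))).
  rewrite addrK => ->; rewrite cX mulr2n opprD addrA; reflexivity.
have DC : forall X, X * D X = D X * X.
  move=> X; have [_ _ cm] := CF X.
  by rewrite /D mulrBr mulrBl cm cX mulrA.
have DZ := Dzero _ addD DJ DC HfL HfR.
have OE : forall X, Omega X = c * X.
  move=> X; apply/eqP; rewrite -subr_eq0; apply/eqP; exact: DZ.
split=> // X.
have [v1 _ _] := CF X.
move: v1; rewrite !OE mulr1 -cC -addrA -opprD -mulrSr -mulrnBl => /(mulIn _ N.+1 isT) /eqP.
rewrite subr_eq0 => /eqP h'; exact: h'.
Qed.

Lemma corollary_sec (HfaithL : faithful_left lact) (HfaithR : faithful_right ract)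
  (n : nat) (Hn : (1 < n)%N)
  (gamma : TR)
  (Hgamma_center : tri_center lact ract gamma)
  (Hgamma_inv : tri_invertible lact ract gamma)
  (Psi Omega : TR -> TR)
  (HPsi_add : tri_additive Psi) (HOmega_add : tri_additive Omega)
  (Hid : forall X : TR,
     Psi (tri_pow lact ract X n)
       = tri_mul lact ract gamma
           (tri_mul lact ract X (Omega (tri_pow lact ract X n.-1)))
     /\ tri_mul lact ract gamma
           (tri_mul lact ract X (Omega (tri_pow lact ract X n.-1)))
       = tri_mul lact ract gamma
           (tri_mul lact ract (Omega (tri_pow lact ract X n.-1)) X))
  (HOmega1 : tri_center lact ract (Omega (tri_one A B M))) :
  two_sided_centralizer lact ract Psi /\ two_sided_centralizer lact ract Omega
  /\ forall X : TR, Psi X = tri_mul lact ract gamma (Omega X).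
Proof.
have [h0 [_ hg]] : exists h : TR, tri_mul lact ract gamma h = tri_one A B M /\ tri_mul lact ract h gamma = tri_one A B M := Hgamma_inv.
have hg' : h0 * gamma = 1 :> TR by rewrite -mulE -oneE; exact: hg.
case: n Hn Hid => [|N] // Hn Hid.
have gC : forall x : TR, gamma * x = x * gamma :> TR.
  by move=> x; rewrite -!mulE; exact: Hgamma_center.
have cC : forall x : TR, Omega 1 * x = x * Omega 1 :> TR.
  by move=> x; rewrite -!mulE -oneE; exact: HOmega1.
have H1 : forall X : TR, Psi (X ^+ N.+1) = gamma * (X * Omega (X ^+ N)) :> TR.
  by move=> X; have [e _] := Hid X; rewrite -!mulE -!powE; exact: e.
have H2 : forall X : TR, gamma * (X * Omega (X ^+ N)) = gamma * (Omega (X ^+ N) * X) :> TR.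
  by move=> X; have [_ e] := Hid X; rewrite -!mulE -!powE; exact: e.
have [OE PE] := main_ring _ _ HPsi_add HOmega_add _ _ hg' _ Hn H1 H2 cC HfaithL HfaithR.
set c := Omega 1 in OE cC; clearbody c.
split; [|split].
- split; first exact: HPsi_add.
  move=> X Y; rewrite !mulE !PE !OE; split.
    by rewrite !mulrA.
  rewrite !mulrA -gC.
  have aux : forall x y : TR, gamma * c * x * y = gamma * x * c * y.
    by move=> x y; rewrite -(mulrA gamma x c) -(cC x) mulrA.
  exact: aux.
- split; first exact: HOmega_add.
  move=> X Y; rewrite !mulE !OE; split.
    by rewrite !mulrA.
  by rewrite mulrA -cC.
- move=> X; rewrite PE mulE; reflexivity.
Qed.

End Ring.

Theorem corollary2p2 (F : fieldType) (charF0 : [pchar F] =i pred0)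
  (A B : algType F) (M : lmodType F)
  (lact : A -> M -> M) (ract : M -> B -> M)
  (Hbimod : is_bimodule lact ract)
  (HfaithL : faithful_left lact) (HfaithR : faithful_right ract)
  (n : nat) (Hn : (1 < n)%N)
  (gamma : Tri A B M)
  (Hgamma_center : tri_center lact ract gamma)
  (Hgamma_inv : tri_invertible lact ract gamma)
  (Psi Omega : Tri A B M -> Tri A B M)
  (HPsi_add : tri_additive Psi) (HOmega_add : tri_additive Omega)
  (Hid : forall X : Tri A B M,
     Psi (tri_pow lact ract X n)
       = tri_mul lact ract gamma
           (tri_mul lact ract X (Omega (tri_pow lact ract X n.-1)))
     /\ tri_mul lact ract gamma
           (tri_mul lact ract X (Omega (tri_pow lact ract X n.-1)))
       = tri_mul lact ract gamma
           (tri_mul lact ract (Omega (tri_pow lact ract X n.-1)) X))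
  (HOmega1 : tri_center lact ract (Omega (tri_one A B M))) :
  two_sided_centralizer lact ract Psi /\ two_sided_centralizer lact ract Omega
  /\ forall X : Tri A B M, Psi X = tri_mul lact ract gamma (Omega X).
Proof.
exact: (@corollary_sec F A B M lact ract Hbimod charF0 HfaithL HfaithR n Hn gamma
  Hgamma_center Hgamma_inv Psi Omega HPsi_add HOmega_add Hid HOmega1).
Qed.
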